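(* Let $R$ be a commutative ring with unity in which every zero divisor is harmless, and let $r\in R$ be a non-zero, non-unit element. Then the following are equivalent: (i) $r$ is irreducible; (ii) $r$ is B-irreducible; (iii) $r$ is F-irreducible.
   Context: A zero divisor $r$ of $R$ is called harmless if there exists a unit $u\in R$ with $r=1-u$. An element $r\in R$ is called irreducible if whenever $r=ab$ with $a,b\in R$, then $a$ is a unit or $b$ is a unit. A non-zero, non-unit element $r\in R$ is called B-irreducible if the principal ideal $(r)$ is a maximal element, with respect to inclusion, of the set of all proper principal ideals of $R$. A factorization of $r$ is an expression $r=a_1\cdots a_n$ with $a_i\in R$; a refinement of this factorization is a factorization obtained by replacing one or more of the factors $a_i$ by a factorization of $a_i$. A non-unit element $r\in R$ is called F-irreducible if every factorization of $r$ has a refinement in which $r$ appears as one of the new factors. *)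

(* Defs.v *)
From HB Require Import structures.
From mathcomp Require Import all_boot all_order all_algebra.
Set Implicit Arguments. Unset Strict Implicit. Unset Printing Implicit Defensive.
Import GRing.Theory.
Local Open Scope ring_scope.

Section Defs.
Variable R : comUnitRingType.

Definition zero_divisor (r : R) : Prop := exists s : R, s != 0 /\ r * s = 0.

Definition harmless (r : R) : Prop :=
  zero_divisor r /\ exists u : R, u \is a GRing.unit /\ r = 1 - u.

Definition irreducible_elt (r : R) : Prop :=
  forall a b : R, r = a * b -> a \is a GRing.unit \/ b \is a GRing.unit.

Definition pideal (a : R) : R -> Prop := fun x => exists c : R, x = a * c.

Definition proper_pideal (a : R) : Prop := exists x, ~ pideal a x.

Definition B_irreducible (r : R) : Prop :=
  r != 0 /\ r \isn't a GRing.unit /\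
  forall s : R, proper_pideal s ->
    (forall x, pideal r x -> pideal s x) -> (forall x, pideal s x -> pideal r x).

Definition factorization (x : R) (s : seq R) : Prop :=
  (0 < size s)%N /\ \prod_(a <- s) a = x.

(* r is F-irreducible: every factorization r = a_1 ... a_n has a refinement
   (each a_i replaced by a factorization t_i of a_i) in which r appears
   among the new factors. *)
Definition F_irreducible (r : R) : Prop :=
  r \isn't a GRing.unit /\
  forall s : seq R, factorization r s ->
    exists t : seq (seq R),
      size t = size s /\
      (forall i, (i < size s)%N -> factorization (nth 0 s i) (nth [::] t i)) /\
      exists i, (i < size s)%N /\ r \in nth [::] t i.
End Defs.

(* Main.v *)
Require Import Defs.
From HB Require Import structures.
From mathcomp Require Import all_boot all_order all_algebra.
Import GRing.Theory.
Local Open Scope ring_scope.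

Section Aux.
Variable R : comUnitRingType.
Hypothesis Hharm : forall z : R, zero_divisor z -> harmless z.

Lemma keyK (a b : R) : a != 0 -> a = a * b -> b \is a GRing.unit.
Proof.
move=> a0 e.
have zd : zero_divisor (1 - b).
  exists a; split => //.
  by rewrite mulrBl mul1r mulrC -e subrr.
have [_ [u [uU eu]]] := Hharm (1 - b) zd.
by move/addrI/oppr_inj: eu => ->.
Qed.

Lemma irr_B (r : R) : r != 0 -> r \isn't a GRing.unit ->
  irreducible_elt r -> B_irreducible r.
Proof.
move=> r0 ru irr; split=> //; split=> // s [y ny] sub x [c ->].
have [d rd] := sub r (ex_intro _ 1 (esym (mulr1 r))).
case: (irr _ _ rd) => [sU|dU].
  by exfalso; apply: ny; exists (s^-1 * y); rewrite mulrA divrr // mul1r.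
exists (d^-1 * c); rewrite rd -mulrA; congr (_ * _).
by rewrite mulrA mulrV ?mul1r.
Qed.

Lemma B_irr (r : R) : B_irreducible r -> irreducible_elt r.
Proof.
move=> [r0 [ru B]] a b e.
case aU: (a \is a GRing.unit); first by left.
right.
have prop : proper_pideal a.
  exists 1 => -[c ec]; move/negbT: aU => /negP; apply.
  by apply/unitrP; exists c; split; rewrite // mulrC.
have sub : forall x, pideal r x -> pideal a x.
  by move=> x [c ->]; exists (b * c); rewrite e mulrA.
have [d ad] := B a prop sub a (ex_intro _ 1 (esym (mulr1 a))).
have a0 : a != 0 by apply: contraNneq r0 => a0; rewrite e a0 mul0r.
have : (b * d) \is a GRing.unit by apply: (keyK _ _ a0); rewrite mulrA -e -ad.
by rewrite unitrM => /andP[].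
Qed.

Lemma irr_split (r : R) : r \isn't a GRing.unit -> irreducible_elt r ->
  forall (s : seq R) (w : R), w \is a GRing.unit -> \prod_(a <- s) a = r * w ->
  exists j, (j < size s)%N /\ exists u, nth 0 s j = r * u.
Proof.
move=> ru irr; elim=> [|a s IH] w wU.
  rewrite big_nil => e; exfalso; move/negP: ru; apply.
  by apply/unitrP; exists w; split; rewrite // mulrC.
rewrite big_cons => e.
have er : r = a * (\prod_(x <- s) x * w^-1) by rewrite mulrA e -mulrA divrr // mulr1.
case: (irr _ _ er) => [aU|PU].
  have wU' : w * a^-1 \is a GRing.unit by rewrite unitrM wU unitrV.
  have eP : \prod_(x <- s) x = r * (w * a^-1).
    by rewrite mulrA -e mulrC mulrA mulVr // mul1r.
  have [j [js [u eu]]] := IH _ wU' eP.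
  by exists j.+1; split => //; exists u.
exists 0%N; split => //; exists (\prod_(x <- s) x * w^-1)^-1.
by rewrite /= er -mulrA divrr // mulr1.
Qed.

Lemma irr_F (r : R) : r \isn't a GRing.unit -> irreducible_elt r -> F_irreducible r.
Proof.
move=> ru irr; split=> // s [sz ps].
have e1 : \prod_(a <- s) a = r * 1 by rewrite mulr1.
have [j [js [u eu]]] := irr_split _ ru irr s _ (unitr1 R) e1.
exists (mkseq (fun i => if i == j then [:: r; u] else [:: nth 0 s i]) (size s)).
split; first by rewrite size_mkseq.
split.
  move=> i ilts; rewrite nth_mkseq //; case: eqP => [->|_]; split => //.
    by rewrite !big_cons big_nil mulr1 eu.
  by rewrite big_cons big_nil mulr1.
exists j; split => //; rewrite nth_mkseq // eqxx.
by rewrite in_cons eqxx.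
Qed.

Lemma mem_prod (r : R) (t : seq R) : r \in t -> exists c, \prod_(a <- t) a = r * c.
Proof. by move=> rt; exists (\prod_(a <- rem r t) a); rewrite (big_rem r rt). Qed.

Lemma F_irr (r : R) : r != 0 -> F_irreducible r -> irreducible_elt r.
Proof.
move=> r0 [ru F] a b e.
have fs : factorization r [:: a; b] by split=> //; rewrite !big_cons big_nil mulr1.
have [t [_ [ft [i [ilt rt]]]]] := F _ fs.
have [fi pi] := ft i ilt.
have [c ec] := mem_prod _ _ rt.
move: ilt pi ec; case: i rt fi => [|[|//]] rt fi _ /= pi ec.
  right; have : (c * b) \is a GRing.unit.
    by apply: (keyK _ _ r0); rewrite mulrA -ec pi.
  by rewrite unitrM => /andP[].
left; have : (c * a) \is a GRing.unit.
  by apply: (keyK _ _ r0); rewrite mulrA -ec pi mulrC.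
by rewrite unitrM => /andP[].
Qed.
End Aux.

Theorem mainTheorem5 (R : comUnitRingType)
  (Hharm : forall z : R, zero_divisor z -> harmless z)
  (r : R) (hr0 : r != 0) (hru : r \isn't a GRing.unit) :
  (irreducible_elt r <-> B_irreducible r) /\ (B_irreducible r <-> F_irreducible r).
Proof.
have i2b := @irr_B R r hr0 hru.
have b2i := @B_irr R Hharm r.
have i2f := @irr_F R r hru.
have f2i := @F_irr R Hharm r hr0.
by split; split => H; auto.
Qed.
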